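(* Let $0<L<\infty$, $\varphi\in(0,1)$, and $\kappa_f,\kappa_s,h_v,c_{p,f},\dot m_c,A_c,R,\mu_f,K_D,K_F,p_{HG}>0$, $T_b>0$, $q_{HG}>0$. Let $(T_f,T_s)$ be the unique solution on $[0,L]$ of $$-\varphi\kappa_fT_f''+c_{p,f}\frac{\dot m_c}{A_c}T_f'=h_v(T_s-T_f),\qquad (1-\varphi)\kappa_sT_s''=h_v(T_s-T_f)\quad\text{on }(0,L),$$ $$T_f(0)=T_s(0)=T_b,\quad (1-\varphi)\kappa_sT_s'(L)=q_{HG}-c_{p,f}\frac{\dot m_c}{A_c}(T_s(L)-T_f(L)),\quad T_f'(L)=\frac{h_vA_c}{c_{p,f}\dot m_c}(T_s(L)-T_f(L)),$$ and assume $\frac{p_{HG}}{R\,T_f(L)}>\frac{\dot m_c}{\varphi A_c}\frac{1}{\sqrt{R\,T_b}}$. Let $\rho_f$ be the unique solution on $[0,L]$ of $\rho_f'(y)=\overline N(y,\rho_f(y))\rho_f(y)$, $\rho_f(L)=\frac{p_{HG}}{R\,T_f(L)}$, where $$\overline N(y,\rho)=\frac{R\,(c_{p,f}\dot m_c)^{-1}h_vA_c\,\rho^2\,(T_s(y)-T_f(y))+\frac{\dot m_c}{A_c}\Big(\frac{\mu_f}{K_D}+\frac{\dot m_c}{K_FA_c}\Big)}{\varphi^{-2}\big(\frac{\dot m_c}{A_c}\big)^2-R\,T_f(y)\,\rho^2},$$ and define the velocity $v(y)=\frac{\dot m_c}{A_c\,\rho_f(y)}$, $y\in[0,L]$. Then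 $v$ is positive and strictly monotonically increasing on $[0,L]$.
   Context: $v$ is the Darcy velocity of the coolant, determined from the constant mass flux $\rho_f v=\dot m_c/A_c$. *)

(* Defs.v *)
From Stdlib Require Import Reals.
Open Scope R_scope.

(* One-sided-at-the-endpoints derivative: f' x is the derivative of f at x
   within the closed interval [a,b] (limit of difference quotients taken
   over y in [a,b], y <> x). *)
Definition deriv_within (a b : R) (f : R -> R) (x l : R) : Prop :=
  a <= x <= b /\
  limit1_in (fun y => (f y - f x) / (y - x))
            (fun y => a <= y <= b /\ y <> x) l x.

Definition temp_solution (L phi kf ks hv cpf mc Ac Tb qHG : R)
  (Tf Ts : R -> R) : Prop :=
  exists dTf dTs d2Tf d2Ts : R -> R,
    (forall y, 0 <= y <= L -> deriv_within 0 L Tf y (dTf y)) /\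
    (forall y, 0 <= y <= L -> deriv_within 0 L Ts y (dTs y)) /\
    (forall y, 0 < y < L -> derivable_pt_lim dTf y (d2Tf y)) /\
    (forall y, 0 < y < L -> derivable_pt_lim dTs y (d2Ts y)) /\
    (forall y, 0 < y < L ->
       - phi * kf * d2Tf y + cpf * (mc / Ac) * dTf y = hv * (Ts y - Tf y)) /\
    (forall y, 0 < y < L ->
       (1 - phi) * ks * d2Ts y = hv * (Ts y - Tf y)) /\
    Tf 0 = Tb /\ Ts 0 = Tb /\
    (1 - phi) * ks * dTs L = qHG - cpf * (mc / Ac) * (Ts L - Tf L) /\
    dTf L = hv * Ac / (cpf * mc) * (Ts L - Tf L).

Definition Nbar (phi hv cpf mc Ac Rg muf KD KF : R) (Tf Ts : R -> R)
  (y rho : R) : R :=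
  (Rg * / (cpf * mc) * hv * Ac * rho ^ 2 * (Ts y - Tf y)
     + mc / Ac * (muf / KD + mc / (KF * Ac)))
  / (/ phi ^ 2 * (mc / Ac) ^ 2 - Rg * Tf y * rho ^ 2).

Definition Nbar_den (phi mc Ac Rg : R) (Tf : R -> R) (y rho : R) : R :=
  / phi ^ 2 * (mc / Ac) ^ 2 - Rg * Tf y * rho ^ 2.

(* Solution on [0,L] of rho' = Nbar(y,rho) rho, rho(L) = pHG/(Rg Tf(L));
   N-bar must be well defined along the solution (nonzero denominator). *)
Definition density_solution (L phi hv cpf mc Ac Rg muf KD KF pHG : R)
  (Tf Ts : R -> R) (rho : R -> R) : Prop :=
  (forall y, 0 <= y <= L -> Nbar_den phi mc Ac Rg Tf y (rho y) <> 0) /\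
  (forall y, 0 <= y <= L ->
     deriv_within 0 L rho y
       (Nbar phi hv cpf mc Ac Rg muf KD KF Tf Ts y (rho y) * rho y)) /\
  rho L = pHG / (Rg * Tf L).

(* Main.v *)
Require Import Defs.
From Stdlib Require Import Reals Lra FunctionalExtensionality.
From Coquelicot Require Import Coquelicot.
Open Scope R_scope.

Definition cl (L y : R) := Rmin L (Rmax 0 y).

Lemma cl_in L y : 0 <= L -> 0 <= cl L y <= L.
Proof. intros. unfold cl, Rmin, Rmax; repeat destruct Rle_dec; lra. Qed.

Lemma cl_id L y : 0 <= y <= L -> cl L y = y.
Proof. intros. unfold cl, Rmin, Rmax; repeat destruct Rle_dec; lra. Qed.

Lemma cl_lip L x y : 0 <= L -> Rabs (cl L x - cl L y) <= Rabs (x - y).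
Proof. intros. unfold cl, Rmin, Rmax; repeat destruct Rle_dec;
  unfold Rabs; repeat destruct Rcase_abs; lra. Qed.

Lemma dw_cont L f x l : deriv_within 0 L f x l ->
  forall eps, 0 < eps -> exists del, 0 < del /\
   forall y, 0 <= y <= L -> Rabs (y - x) < del -> Rabs (f y - f x) < eps.
Proof.
  intros [Hx Hl] eps He.
  destruct (Hl 1 ltac:(lra)) as [alp [Ha H]].
  exists (Rmin alp (eps / (Rabs l + 1))). split.
  { apply Rmin_glb_lt; auto. apply Rdiv_lt_0_compat; auto. pose proof (Rabs_pos l); lra. }
  intros y Hy Hd.
  destruct (Req_dec y x) as [->|Hne]. { rewrite Rminus_diag, Rabs_R0; auto. }
  assert (Hq := H y (conj (conj Hy Hne) (Rlt_le_trans _ _ _ Hd (Rmin_l _ _)))).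
  simpl in Hq; unfold R_dist in Hq.
  assert (Hd2 : Rabs (y - x) < eps / (Rabs l + 1)) by (eapply Rlt_le_trans; [apply Hd| apply Rmin_r]).
  assert (Hyx : y - x <> 0) by lra.
  replace (f y - f x) with ((f y - f x) / (y - x) * (y - x)) by (field; auto).
  rewrite Rabs_mult.
  assert (Rabs ((f y - f x) / (y - x)) <= Rabs l + 1).
  { pose proof (Rabs_triang_inv ((f y - f x) / (y - x)) l). lra. }
  pose proof (Rabs_pos l).
  assert (0 < Rabs (y - x)) by (apply Rabs_pos_lt; auto).
  apply Rle_lt_trans with ((Rabs l + 1) * Rabs (y - x)).
  { apply Rmult_le_compat_r; lra. }
  replace eps with ((Rabs l + 1) * (eps / (Rabs l + 1))) by (field; lra).
  apply Rmult_lt_compat_l; lra.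
Qed.

Lemma ext_cont L f fd : 0 <= L ->
  (forall x, 0 <= x <= L -> deriv_within 0 L f x (fd x)) ->
  continuity (fun y => f (cl L y)).
Proof.
  intros HL Hd y. unfold continuity_pt, continue_in, limit1_in, limit_in.
  intros eps He. simpl. unfold R_dist.
  destruct (dw_cont L f (cl L y) (fd (cl L y)) (Hd _ (cl_in L y HL)) eps He) as [del [Hdel H]].
  exists del; split; auto. intros x [_ Hx].
  apply H. apply cl_in; auto.
  eapply Rle_lt_trans. apply cl_lip; auto. auto.
Qed.

Lemma dw_int L f x l : deriv_within 0 L f x l -> 0 < x < L ->
  derivable_pt_lim (fun y => f (cl L y)) x l.
Proof.
  intros [Hx Hl] Hxi eps He.
  destruct (Hl eps He) as [alp [Ha H]].
  assert (Hp : 0 < Rmin alp (Rmin x (L - x))).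
  { repeat apply Rmin_glb_lt; lra. }
  exists (mkposreal _ Hp). intros h Hh Hha. simpl in Hha.
  assert (Hh1 := Rlt_le_trans _ _ _ Hha (Rmin_l _ _)).
  assert (Hh2 := Rlt_le_trans _ _ _ Hha (Rmin_r _ _)).
  pose proof (Rmin_l x (L-x)). pose proof (Rmin_r x (L-x)).
  assert (Hb : Rabs h < x /\ Rabs h < L - x) by lra.
  assert (0 <= x + h <= L).
  { destruct Hb. unfold Rabs in *; destruct Rcase_abs; lra. }
  rewrite (cl_id L (x+h)), (cl_id L x) by lra.
  assert (Hq := H (x + h)). simpl in Hq; unfold R_dist in Hq.
  replace (x + h - x) with h in Hq by ring. apply Hq. split; auto. split; auto.
  intro Hc. apply Hh. lra.
Qed.

Lemma dw_int' L f x l : deriv_within 0 L f x l -> 0 < x < L ->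
  derivable_pt_lim f x l.
Proof.
  intros Hd Hxi. assert (H := dw_int L f x l Hd Hxi).
  intros eps He. destruct (H eps He) as [del Hdel].
  assert (Hp : 0 < Rmin del (Rmin x (L - x))).
  { destruct del; simpl; repeat apply Rmin_glb_lt; lra. }
  exists (mkposreal _ Hp). intros h Hh Hha. simpl in Hha.
  pose proof (Rmin_l x (L-x)). pose proof (Rmin_r x (L-x)).
  pose proof (Rmin_l del (Rmin x (L-x))). pose proof (Rmin_r del (Rmin x (L-x))).
  assert (Hb : Rabs h < del /\ Rabs h < x /\ Rabs h < L - x) by lra.
  assert (0 <= x + h <= L).
  { destruct Hb as [_ [? ?]]. unfold Rabs in *; destruct Rcase_abs; lra. }
  assert (Hq := Hdel h Hh (proj1 Hb)). simpl in Hq.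
  rewrite (cl_id L (x+h)), (cl_id L x) in Hq by lra. auto.
Qed.

Lemma mvtw L f fd x z : (forall y, 0 <= y <= L -> deriv_within 0 L f y (fd y)) ->
  0 <= x -> x < z -> z <= L -> exists xi, x < xi < z /\ f z - f x = fd xi * (z - x).
Proof.
  intros Hd H0 Hxz HzL.
  set (F := fun y => f (cl L y)).
  assert (pr1 : forall c, x < c < z -> derivable_pt F c).
  { intros c Hc. exists (fd c). apply dw_int. apply Hd; lra. lra. }
  assert (pr2 : forall c, x < c < z -> derivable_pt id c).
  { intros c Hc. exists 1. apply derivable_pt_lim_id. }
  assert (HF := ext_cont L f fd ltac:(lra) Hd).
  destruct (MVT F id x z pr1 pr2 Hxz (fun c _ => HF c) (fun c _ => derivable_continuous_pt _ _ (derivable_pt_id c))) as [c [P HP]].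
  rewrite (derive_pt_eq_0 F c (fd c) (pr1 c P)) in HP.
  2:{ apply dw_int. apply Hd; lra. lra. }
  rewrite (derive_pt_eq_0 id c 1 (pr2 c P)) in HP by apply derivable_pt_lim_id.
  exists c; split; auto. unfold F, id in HP. rewrite !cl_id in HP by lra. lra.
Qed.

Lemma dw_minus L f g x l1 l2 : deriv_within 0 L f x l1 -> deriv_within 0 L g x l2 ->
  deriv_within 0 L (fun y => f y - g y) x (l1 - l2).
Proof.
  intros [Hx H1] [_ H2]. split; auto.
  assert (H := limit_minus _ _ _ _ _ _ H1 H2).
  replace (fun y => (f y - g y - (f x - g x)) / (y - x)) with
    (fun y => (f y - f x) / (y - x) - (g y - g x) / (y - x)); auto.
  apply functional_extensionality; intro y. unfold Rdiv. ring.
Qed.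

Lemma dw_bound_right L f l : deriv_within 0 L f L l -> 0 < L ->
  (forall y, 0 <= y <= L -> f L <= f y) -> l <= 0.
Proof.
  intros [_ Hl] HL Hm. destruct (Rle_lt_dec l 0) as [|Hp]; auto. exfalso.
  destruct (Hl l Hp) as [alp [Ha H]].
  set (x := Rmax 0 (L - alp/2)).
  assert (0 <= x < L) by (unfold x, Rmax; destruct Rle_dec; lra).
  assert (L - x < alp) by (unfold x, Rmax; destruct Rle_dec; lra).
  assert (Hq := H x). simpl in Hq; unfold R_dist in Hq.
  assert (Hq' : Rabs ((f x - f L) / (x - L) - l) < l).
  { apply Hq. split. split; [lra|lra]. rewrite Rabs_minus_sym, Rabs_right; lra. }
  assert ((f x - f L) / (x - L) <= 0).
  { unfold Rdiv. assert (f L <= f x) by (apply Hm; lra).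
    assert (/ (x - L) < 0) by (apply Rinv_lt_0_compat; lra). nra. }
  unfold Rabs in Hq'; destruct Rcase_abs; lra.
Qed.

Lemma dw_limit_bound L f fd y0 B : (forall y, 0 <= y <= L -> deriv_within 0 L f y (fd y)) ->
  0 < y0 < L -> (forall y, y0 < y < L -> fd y <= B) -> fd L <= B.
Proof.
  intros Hd Hy0 HB. destruct (Rle_lt_dec (fd L) B) as [|Hp]; auto. exfalso.
  destruct (Hd L ltac:(lra)) as [_ Hl].
  destruct (Hl (fd L - B) ltac:(lra)) as [alp [Ha H]].
  set (x := Rmax ((y0 + L)/2) (L - alp/2)).
  assert (y0 < x < L) by (unfold x, Rmax; destruct Rle_dec; lra).
  assert (L - x < alp) by (unfold x, Rmax; destruct Rle_dec; lra).
  assert (Hq := H x). simpl in Hq; unfold R_dist in Hq.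
  assert (Hq' : Rabs ((f x - f L) / (x - L) - fd L) < fd L - B).
  { apply Hq. split. split; [lra|lra]. rewrite Rabs_minus_sym, Rabs_right; lra. }
  destruct (mvtw L f fd x L Hd ltac:(lra) ltac:(lra) ltac:(lra)) as [xi [Hxi Hm]].
  assert (Hr : (f x - f L) / (x - L) = fd xi).
  { replace (f x - f L) with (- (f L - f x)) by ring. rewrite Hm. field. lra. }
  rewrite Hr in Hq'. assert (fd xi <= B) by (apply HB; lra).
  unfold Rabs in Hq'; destruct Rcase_abs; lra.
Qed.

Lemma int_min_zero f x l a b : derivable_pt_lim f x l -> a < x < b ->
  (forall y, a < y < b -> f x <= f y) -> l = 0.
Proof.
  intros Hd Hx Hm.
  assert (pr : derivable_pt f x) by (exists l; auto).
  rewrite <- (derive_pt_eq_0 f x l pr Hd).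
  apply (deriv_minimum f a b x pr); try lra. intros y H1 H2; apply Hm; lra.
Qed.

Lemma mono_le g g' a b : a < b -> (forall x, a <= x <= b -> derivable_pt_lim g x (g' x)) ->
  (forall x, a < x < b -> g' x <= 0) -> g b <= g a.
Proof.
  intros Hab Hd Hn. destruct (MVT_cor2 g g' a b Hab Hd) as [c [Hc Hc2]].
  assert (g' c <= 0) by (apply Hn; auto). nra.
Qed.

Lemma second_deriv L f f' y0 d : 0 < y0 < L ->
  (forall y, 0 < y < L -> derivable_pt_lim f y (f' y)) -> f' y0 = 0 ->
  derivable_pt_lim f' y0 d -> d < 0 -> exists y, 0 < y < L /\ f y < f y0.
Proof.
  intros Hy0 Hd Hz Hd2 Hneg.
  destruct (Hd2 (- d / 2) ltac:(lra)) as [del Hdel].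
  set (e := Rmin del (L - y0) / 2).
  assert (He : 0 < e /\ e < del /\ e < L - y0).
  { destruct del as [dl Hdl]; simpl in *. unfold e, Rmin; destruct Rle_dec; lra. }
  exists (y0 + e). split; [lra|].
  destruct (MVT_cor2 f f' y0 (y0 + e) ltac:(lra)) as [c [Hc Hc2]].
  { intros c Hc. apply Hd; lra. }
  assert (Hq := Hdel (c - y0) ltac:(lra)).
  replace (y0 + (c - y0)) with c in Hq by ring. rewrite Hz in Hq.
  assert (Hq2 : Rabs (c - y0) < del) by (rewrite Rabs_right; lra).
  specialize (Hq Hq2).
  assert (f' c / (c - y0) < 0) by (unfold Rabs in Hq; destruct Rcase_abs; lra).
  assert (f' c < 0).
  { replace (f' c) with (f' c / (c - y0) * (c - y0)) by (field; lra). nra. }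
  nra.
Qed.

Lemma exp_deriv k r r' y : derivable_pt_lim r y r' ->
  derivable_pt_lim (fun y => exp (-(k*y)) * r y) y (exp(-(k*y)) * (r' - k * r y)).
Proof.
intros.
replace (exp (-(k*y)) * (r' - k*r y)) with ((-k * exp(-(k*y))) * r y + exp(-(k*y)) * r') by ring.
apply (derivable_pt_lim_mult (fun y => exp(-(k*y))) r y); auto.
apply is_derive_Reals. auto_derive. auto. ring.
Qed.
Theorem proposition4
  (L phi kf ks hv cpf mc Ac Rg muf KD KF pHG Tb qHG : R)
  (Tf Ts rho : R -> R)
  (HL : 0 < L) (Hphi : 0 < phi < 1)
  (Hkf : 0 < kf) (Hks : 0 < ks) (Hhv : 0 < hv) (Hcpf : 0 < cpf)
  (Hmc : 0 < mc) (HAc : 0 < Ac) (HRg : 0 < Rg) (Hmuf : 0 < muf)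
  (HKD : 0 < KD) (HKF : 0 < KF) (HpHG : 0 < pHG)
  (HTb : 0 < Tb) (HqHG : 0 < qHG)
  (HT : temp_solution L phi kf ks hv cpf mc Ac Tb qHG Tf Ts)
  (HTuniq : forall Tf' Ts', temp_solution L phi kf ks hv cpf mc Ac Tb qHG Tf' Ts' ->
              forall y, 0 <= y <= L -> Tf' y = Tf y /\ Ts' y = Ts y)
  (Hin : pHG / (Rg * Tf L) > mc / (phi * Ac) * (1 / sqrt (Rg * Tb)))
  (Hrho : density_solution L phi hv cpf mc Ac Rg muf KD KF pHG Tf Ts rho)
  (Hrhouniq : forall rho', density_solution L phi hv cpf mc Ac Rg muf KD KF pHG Tf Ts rho' ->
              forall y, 0 <= y <= L -> rho' y = rho y) :
  let v := fun y => mc / (Ac * rho y) in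
  (forall y, 0 <= y <= L -> 0 < v y) /\
  (forall y1 y2, 0 <= y1 <= L -> 0 <= y2 <= L -> y1 < y2 -> v y1 < v y2).
Proof.
  intro v.
  destruct HT as [dTf [dTs [d2Tf [d2Ts [HdTf [HdTs [Hd2Tf [Hd2Ts [Ef [Es [Hf0 [Hs0 [BCs BCf]]]]]]]]]]]]].
  set (a := (1 - phi) * ks). set (b := phi * kf). set (c := cpf * (mc / Ac)).
  assert (Ha : 0 < a) by (unfold a; nra).
  assert (Hb : 0 < b) by (unfold b; nra).
  assert (Hc : 0 < c) by (unfold c; apply Rmult_lt_0_compat; [lra| apply Rdiv_lt_0_compat; lra]).
  assert (HcdL : c * dTf L = hv * (Ts L - Tf L)).
  { rewrite BCf. unfold c. field. lra. }
  assert (LA : forall m, (forall y, 0 <= y <= L -> m <= Ts y - Tf y) ->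
             forall y0, 0 < y0 < L -> hv * m <= c * dTf y0).
  { intros m Hm y0 Hy0. destruct (Rle_lt_dec (hv * m) (c * dTf y0)) as [|Hlt]; auto. exfalso.
    set (r := fun y => c * dTf y - hv * m). set (k := c / b).
    assert (Hk : 0 < k) by (unfold k; apply Rdiv_lt_0_compat; lra).
    assert (Hr : forall y, y0 < y < L -> r y <= r y0).
    { intros y Hy.
      assert (Hmo := mono_le (fun t => exp (-(k*t)) * r t)
                  (fun t => exp (-(k*t)) * (c * d2Tf t - k * r t)) y0 y ltac:(lra)).
      assert (HH : exp (- (k * y)) * r y <= exp (- (k * y0)) * r y0).
      { apply Hmo.
        - intros t Ht. apply exp_deriv. unfold r.
          replace (c * d2Tf t) with (c * d2Tf t - 0) by ring.
          apply (derivable_pt_lim_minus (fun t => c * dTf t) (fun _ => hv * m)).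
          apply (derivable_pt_lim_scal dTf c). apply Hd2Tf; lra. apply derivable_pt_lim_const.
        - intros t Ht.
          assert (E : c * d2Tf t - k * r t = k * hv * (m - (Ts t - Tf t))).
          { assert (Et := Ef t ltac:(lra)).
            assert (Et' : hv * (Ts t - Tf t) = c * dTf t - b * d2Tf t) by (unfold b, c; rewrite <- Et; ring).
            unfold r. replace (k * hv * (m - (Ts t - Tf t))) with (k * (hv * m - hv * (Ts t - Tf t))) by ring.
            rewrite Et'. unfold k. field. lra. }
          rewrite E. assert (m <= Ts t - Tf t) by (apply Hm; lra).
          assert (0 < exp (- (k * t))) by apply exp_pos.
          assert (0 <= k * hv) by (apply Rmult_le_pos; lra).
          assert (k * hv * (m - (Ts t - Tf t)) <= 0) by nra.
          set (z := k * hv * (m - (Ts t - Tf t))) in *. nra. }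
      assert (r y <= exp (k * (y - y0)) * r y0).
      { apply Rmult_le_reg_l with (exp (- (k * y))). apply exp_pos.
        replace (exp (- (k * y)) * (exp (k * (y - y0)) * r y0)) with
           (exp (- (k * y)) * exp (k * (y - y0)) * r y0) by ring.
        rewrite <- exp_plus. replace (- (k * y) + k * (y - y0)) with (- (k * y0)) by ring. auto. }
      assert (1 <= exp (k * (y - y0))).
      { pose proof (exp_ineq1_le (k * (y - y0))). assert (0 <= k * (y - y0)) by nra. lra. }
      assert (r y0 < 0) by (unfold r; lra). nra. }
    assert (HB := dw_limit_bound L Tf dTf y0 ((r y0 + hv * m) / c) HdTf Hy0).
    assert (dTf L <= (r y0 + hv * m) / c).
    { apply HB. intros y Hy. assert (Hry := Hr y Hy). unfold r in Hry |- *.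
      apply Rmult_le_reg_l with c; auto. field_simplify; lra. }
    assert (c * dTf L <= r y0 + hv * m).
    { replace (r y0 + hv*m) with (c * ((r y0 + hv*m)/c)) by (field; lra).
      apply Rmult_le_compat_l; lra. }
    assert (m <= Ts L - Tf L) by (apply Hm; lra).
    assert (r y0 < 0) by (unfold r; lra). nra. }
  assert (Hw : forall y, 0 <= y <= L -> 0 <= Ts y - Tf y).
  { set (W := fun y => Ts (cl L y) - Tf (cl L y)).
    assert (HW : continuity W).
    { apply (continuity_minus (fun y => Ts (cl L y)) (fun y => Tf (cl L y))).
      apply (ext_cont L Ts dTs); auto; lra. apply (ext_cont L Tf dTf); auto; lra. }
    destruct (continuity_ab_min W 0 L ltac:(lra) (fun c _ => HW c)) as [y0 [Hmin Hy0]].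
    unfold W in Hmin. rewrite cl_id in Hmin by lra.
    assert (Hmin' : forall y, 0 <= y <= L -> Ts y0 - Tf y0 <= Ts y - Tf y).
    { intros y Hy. specialize (Hmin y Hy). rewrite cl_id in Hmin by lra. auto. }
    intros y Hy. destruct (Rle_lt_dec 0 (Ts y0 - Tf y0)) as [Hp|Hn].
    { specialize (Hmin' y Hy). lra. }
    exfalso. set (m := Ts y0 - Tf y0) in *.
    assert (y0 <> 0). { intro E. unfold m in Hn. rewrite E, Hf0, Hs0 in Hn. lra. }
    destruct (Req_dec y0 L) as [EL|NL].
    - assert (Hd := dw_minus L Ts Tf L (dTs L) (dTf L) (HdTs L ltac:(lra)) (HdTf L ltac:(lra))).
      assert (Hle := dw_bound_right L (fun y => Ts y - Tf y) _ Hd HL).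
      assert (dTs L - dTf L <= 0).
      { apply Hle. intros z Hz. rewrite <- EL. apply Hmin'; auto. }
      assert (Hm' : Ts L - Tf L < 0) by (rewrite <- EL; auto).
      assert (a * dTs L > 0) by (unfold a; rewrite BCs; fold c; nra).
      assert (dTs L > 0) by nra.
      assert (c * dTf L < 0) by nra.
      assert (dTf L < 0) by nra. lra.
    - assert (Hy0i : 0 < y0 < L) by lra.
      assert (Hhm := LA m Hmin' y0 Hy0i).
      assert (Hder : forall z, 0 < z < L -> derivable_pt_lim (fun y => Ts y - Tf y) z (dTs z - dTf z)).
      { intros z Hz. apply (dw_int' L). apply dw_minus; [apply HdTs|apply HdTf]; lra. auto. }
      assert (Hz0 : dTs y0 - dTf y0 = 0).
      { apply (int_min_zero (fun y => Ts y - Tf y) y0 _ 0 L); auto.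
        intros z Hz; apply Hmin'; lra. }
      assert (Hd2 : derivable_pt_lim (fun y => dTs y - dTf y) y0 (d2Ts y0 - d2Tf y0)).
      { apply (derivable_pt_lim_minus dTs dTf); auto. }
      assert (Es0 := Es y0 Hy0i). assert (Ef0 := Ef y0 Hy0i).
      fold a in Es0. fold c in Ef0. fold m in Es0, Ef0.
      assert (d2Ts y0 < 0) by nra.
      assert (Eb : b * d2Tf y0 = c * dTf y0 - hv * m) by (unfold b; rewrite <- Ef0; ring).
      assert (d2Tf y0 >= 0) by nra.
      destruct (second_deriv L (fun y => Ts y - Tf y) (fun y => dTs y - dTf y) y0 _ Hy0i Hder Hz0 Hd2 ltac:(lra)) as [z [Hz Hlt]].
      specialize (Hmin' z ltac:(lra)). unfold m in Hmin'. lra. }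
  assert (HTfL : Tb <= Tf L).
  { destruct (mvtw L Tf dTf 0 L HdTf ltac:(lra) HL ltac:(lra)) as [xi [Hxi E]].
    assert (hv * 0 <= c * dTf xi) by (apply (LA 0); auto).
    assert (0 <= dTf xi) by nra. rewrite Hf0 in E. nra. }
  destruct Hrho as [Hden [Hdr HrL]].
  set (M := mc / (phi * Ac)).
  assert (HM : 0 < M) by (unfold M; apply Rdiv_lt_0_compat; nra).
  assert (HK0 : / phi ^ 2 * (mc / Ac) ^ 2 = M * M) by (unfold M; field; lra).
  assert (Hs := sqrt_lt_R0 (Rg * Tb) ltac:(nra)).
  assert (Hs2 := sqrt_sqrt (Rg * Tb) ltac:(nra)).
  assert (HrhoL : rho L * sqrt (Rg * Tb) > M).
  { rewrite HrL. fold M in Hin.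
    apply Rmult_lt_reg_r with (/ sqrt (Rg * Tb)). apply Rinv_0_lt_compat; auto.
    rewrite Rmult_assoc, Rinv_r by lra. rewrite Rmult_1_r. unfold Rdiv in Hin. lra. }
  assert (HrL0 : 0 < rho L) by nra.
  assert (HdenL : Nbar_den phi mc Ac Rg Tf L (rho L) < 0).
  { unfold Nbar_den. rewrite HK0.
    assert (rho L * rho L * (Rg * Tb) > M * M).
    { set (sq := sqrt (Rg * Tb)) in *.
      replace (rho L * rho L * (Rg * Tb)) with ((rho L * sq) * (rho L * sq)) by (rewrite <- Hs2; ring).
      nra. }
    nra. }
  set (Dc := fun y => / phi ^ 2 * (mc / Ac) ^ 2 - Rg * Tf (cl L y) * (rho (cl L y) * rho (cl L y))).
  assert (HDc : forall y, 0 <= y <= L -> Dc y = Nbar_den phi mc Ac Rg Tf y (rho y)).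
  { intros y Hy. unfold Dc, Nbar_den. rewrite cl_id by auto. ring. }
  set (dr := fun y => Nbar phi hv cpf mc Ac Rg muf KD KF Tf Ts y (rho y) * rho y).
  assert (Hrc : continuity (fun y => rho (cl L y))) by (apply (ext_cont L rho dr); auto; lra).
  assert (HTc : continuity (fun y => Tf (cl L y))) by (apply (ext_cont L Tf dTf); auto; lra).
  assert (HDcc : continuity Dc).
  { unfold Dc. apply (continuity_minus (fun _ => / phi ^ 2 * (mc / Ac) ^ 2)).
    apply continuity_const. intros ? ?; auto.
    apply (continuity_mult (fun y => Rg * Tf (cl L y))). apply (continuity_scal (fun y => Tf (cl L y)) Rg). auto.
    apply continuity_mult; auto. }
  assert (Hneg : forall y, 0 <= y <= L -> Nbar_den phi mc Ac Rg Tf y (rho y) < 0).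
  { intros y Hy. destruct (Rlt_le_dec (Nbar_den phi mc Ac Rg Tf y (rho y)) 0) as [|Hge]; auto.
    exfalso. assert (Hne := Hden y Hy).
    assert (Hgt : 0 < Dc y) by (rewrite HDc; auto; lra).
    assert (y <> L) by (intro E; subst y; lra).
    destruct (IVT (fun t => - Dc t) y L (continuity_opp _ HDcc) ltac:(lra) ltac:(lra)) as [z [Hz Ez]].
    { rewrite HDc by lra. lra. }
    apply (Hden z). lra. rewrite <- HDc by lra. lra. }
  assert (Hpos : forall y, 0 <= y <= L -> 0 < rho y).
  { intros y Hy. destruct (Rlt_le_dec 0 (rho y)) as [|Hle]; auto. exfalso.
    destruct (Req_dec (rho y) 0) as [E|NE].
    { assert (Hn := Hneg y Hy). unfold Nbar_den in Hn. rewrite E, HK0 in Hn. nra. }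
    assert (y <> L) by (intro E; subst y; lra).
    destruct (IVT (fun t => rho (cl L t)) y L Hrc ltac:(lra)) as [z [Hz Ez]].
    { rewrite cl_id by lra. lra. } { rewrite cl_id by lra. lra. }
    rewrite cl_id in Ez by lra.
    assert (Hn := Hneg z ltac:(lra)). unfold Nbar_den in Hn. rewrite Ez, HK0 in Hn. nra. }
  assert (Hdneg : forall y, 0 <= y <= L -> dr y < 0).
  { intros y Hy. unfold dr, Nbar. assert (Hn := Hneg y Hy). unfold Nbar_den in Hn.
    assert (Hw' := Hw y Hy). assert (Hr' := Hpos y Hy).
    set (num := Rg * / (cpf * mc) * hv * Ac * rho y ^ 2 * (Ts y - Tf y) + mc / Ac * (muf / KD + mc / (KF * Ac))).
    assert (0 < num).
    { unfold num. assert (0 <= Rg * / (cpf * mc) * hv * Ac * rho y ^ 2 * (Ts y - Tf y)).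
      { assert (0 < / (cpf * mc)) by (apply Rinv_0_lt_compat; nra).
        assert (0 <= rho y ^ 2) by (apply pow_le; lra).
        repeat apply Rmult_le_pos; lra. }
      assert (0 < mc / Ac * (muf / KD + mc / (KF * Ac))).
      { apply Rmult_lt_0_compat. apply Rdiv_lt_0_compat; lra.
        apply Rplus_lt_0_compat; apply Rdiv_lt_0_compat; nra. }
      lra. }
    assert (num / (/ phi ^ 2 * (mc / Ac) ^ 2 - Rg * Tf y * rho y ^ 2) < 0).
    { unfold Rdiv. assert (/ (/ phi ^ 2 * (mc / Ac) ^ 2 - Rg * Tf y * rho y ^ 2) < 0) by (apply Rinv_lt_0_compat; auto). nra. }
    nra. }
  split.
  - intros y Hy. unfold v. apply Rdiv_lt_0_compat; auto. apply Rmult_lt_0_compat; auto.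
  - intros y1 y2 H1 H2 H12. unfold v.
    destruct (mvtw L rho dr y1 y2 Hdr ltac:(lra) H12 ltac:(lra)) as [xi [Hxi E]].
    assert (dr xi < 0) by (apply Hdneg; lra).
    assert (rho y2 < rho y1) by nra.
    assert (0 < rho y2) by (apply Hpos; auto).
    assert (0 < rho y1) by (apply Hpos; auto).
    unfold Rdiv. apply Rmult_lt_compat_l; auto. apply Rinv_lt_contravar.
    apply Rmult_lt_0_compat; apply Rmult_lt_0_compat; auto.
    apply Rmult_lt_compat_l; auto.
Qed.
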